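(* Let $0\le x\le1$, $0\le y\le1$ and $0<\alpha<\infty$. Then $$\sqrt{xy}+\sqrt{(1-x)(1-y)}\le 1+\frac12(\alpha-1)x+\frac12\Big(\frac1\alpha-1\Big)y.$$ *)

(* Defs.v *)
From Stdlib Require Export Reals.

(* Main.v *)
Require Import Defs.
From Stdlib Require Import Reals Lra Psatz.
Open Scope R_scope.

Lemma amgm (a b : R) : 0 <= a -> 0 <= b -> sqrt (a * b) <= (a + b) / 2.
Proof.
  intros Ha Hb. rewrite sqrt_mult by lra.
  pose proof (sqrt_sqrt a Ha). pose proof (sqrt_sqrt b Hb).
  pose proof (sqrt_pos a). pose proof (sqrt_pos b).
  pose proof (pow2_ge_0 (sqrt a - sqrt b)). rewrite <- H at 2. rewrite <- H0 at 2.
  simpl in *. lra.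
Qed.

Theorem lemma1 (x y alpha : R)
  (hx0 : 0 <= x) (hx1 : x <= 1) (hy0 : 0 <= y) (hy1 : y <= 1) (ha : 0 < alpha) :
  sqrt (x * y) + sqrt ((1 - x) * (1 - y))
    <= 1 + / 2 * (alpha - 1) * x + / 2 * (/ alpha - 1) * y.
Proof.
  assert (Hi : 0 < / alpha) by (apply Rinv_0_lt_compat; lra).
  assert (E : x * y = (alpha * x) * (/ alpha * y)) by (field; lra).
  rewrite E.
  pose proof (amgm (alpha * x) (/ alpha * y) ltac:(nra) ltac:(nra)).
  pose proof (amgm (1 - x) (1 - y) ltac:(lra) ltac:(lra)).
  lra.
Qed.
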